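(* Let $\mathcal{G}=\langle\mathbb{V},\mathbb{E}\rangle$ be as in the context, let $e:\mathbb{E}\to\{1,\dots,|\mathbb{E}|\}$ be a bijection, and let $\mathcal{F}$ be a feedback arc set of $\mathcal{G}$. Then there exists an $\mathcal{H}^{(|\mathbb{V}|\cdot(|\mathbb{E}|+1)+|\mathcal{F}|)}$-partition of $\mathcal{P}(\mathcal{G},e)$.
   Context: Standing assumption: $\mathcal{G}=\langle\mathbb{V},\mathbb{E}\rangle$ is a finite directed graph with $\mathbb{V}\ne\emptyset$, without self-loops, in which every vertex has in-degree $1$ or out-degree $1$; let $m=|\mathbb{E}|$. A feedback arc set of $\mathcal{G}$ is a subset of $\mathbb{E}$ meeting every directed cycle. For $v\in\mathbb{V}$ the gadget $\mathcal{N}_v=\langle\mathcal{V}_v,\mathcal{E}_v\rangle$ has vertices $\mathcal{V}_v=\{v_{i,j}:0\le i,j\le m\}$ (distinct for distinct $v$) and arcs $\mathcal{E}_v=\{\langle v_{i,j},v_{i,j+1}\rangle:0\le i\le m,0\le j<m\}\cup\{\langle v_{i,j},v_{i+1,j}\rangle:0\le i<m,0\le j\le m\}$. The digraph $\mathcal{P}(\mathcal{G},e)=\langle\mathbb{V}_{\mathcal{G}},\mathbb{E}_{\mathcal{G}}\rangle$ has vertex set $\mathbb{V}_{\mathcal{G}}=\bigcup_{v\in\mathbb{V}}\mathcal{V}_v\cup\mathbb{E}$ (each arc of $\mathcal{G}$ is also a vertex) and arc set $\mathbb{E}_{\mathcal{G}}=\bigcup_{v\in\mathbb{V}}\mathcal{E}_v\cup\{\langle\langle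 v,u\rangle,v_{e(\langle v,u\rangle),0}\rangle:\langle v,u\rangle\in\mathbb{E}\}\cup\{\langle\langle v,u\rangle,u_{0,e(\langle v,u\rangle)}\rangle:\langle v,u\rangle\in\mathbb{E}\}$; it is a DAG. For a DAG $G$, a partition $\pi$ of its vertex set is an $\mathcal{H}^{(k)}$-partition if $|\pi|=k$, every induced subgraph $G[P]$, $P\in\pi$, has a directed Hamiltonian path, and the quotient digraph $G/\pi$ (vertex set $\pi$, arc $\langle P,Q\rangle$ for $P\ne Q$ whenever some arc of $G$ goes from $P$ to $Q$) is acyclic. *)

(* Defs.v *)
From mathcomp Require Import all_boot.
Set Implicit Arguments. Unset Strict Implicit. Unset Printing Implicit Defensive.

Definition no_self_loops (V : finType) (E : {set V * V}) : Prop :=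
  forall v : V, (v, v) \notin E.

Definition indeg (V : finType) (E : {set V * V}) (v : V) : nat :=
  #|[set u | (u, v) \in E]|.
Definition outdeg (V : finType) (E : {set V * V}) (v : V) : nat :=
  #|[set u | (v, u) \in E]|.

Definition deg_cond (V : finType) (E : {set V * V}) : Prop :=
  forall v : V, indeg E v = 1 \/ outdeg E v = 1.

Definition arc_labelling (V : finType) (E : {set V * V}) (e : V * V -> nat) : Prop :=
  {in E &, injective e} /\ (forall a, a \in E -> 1 <= e a <= #|E|).

Definition arc_rel (V : finType) (E : {set V * V}) : rel V :=
  fun x y => (x, y) \in E.

(* A directed cycle: a nonempty duplicate-free cyclic sequence of vertices
   v_0 ... v_{k-1} with arcs <v_i, v_{i+1 mod k}>; its arcs are <x, next c x>. *)
Definition feedback_arc_set (V : finType) (E : {set V * V}) (F : {set V * V}) : Prop :=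
  F \subset E /\
  forall c : seq V, c != [::] -> uniq c -> cycle (arc_rel E) c ->
    exists2 x, x \in c & (x, next c x) \in F.

(* Vertices of P(G,e): gadget vertices v_{i,j} (0 <= i,j <= m) and the arcs of G. *)
Definition PV (V : finType) (E : {set V * V}) : finType :=
  ((V * 'I_(#|E|).+1 * 'I_(#|E|).+1) + {a : V * V | a \in E})%type.

Definition Prel (V : finType) (E : {set V * V}) (e : V * V -> nat) : rel (PV E) :=
  fun x y =>
    match x, y with
    | inl (v, i, j), inl (v', i', j') =>
        (v == v') &&
        (((val i == val i') && (val j' == (val j).+1)) ||
         ((val i' == (val i).+1) && (val j == val j')))
    | inr a, inl (w, i, j) =>
        ((w == (val a).1) && (val i == e (val a)) && (val j == 0)) ||
        ((w == (val a).2) && (val i == 0) && (val j == e (val a)))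
    | _, _ => false
    end.

Definition has_ham_path (W : finType) (r : rel W) (P : {set W}) : Prop :=
  exists s : seq W, perm_eq s (enum P) /\ sorted r s.

Definition quot_rel (W : finType) (r : rel W) : rel {set W} :=
  fun P Q => (P != Q) && [exists x in P, exists y in Q, r x y].

Definition acyclic_on (T : eqType) (r : rel T) (A : pred T) : Prop :=
  forall c : seq T, c != [::] -> all A c -> ~~ cycle r c.

Definition H_partition (W : finType) (r : rel W) (k : nat) (pi : {set {set W}}) : Prop :=
  [/\ partition pi [set: W],
      #|pi| = k,
      (forall P, P \in pi -> has_ham_path r P) &
      acyclic_on (quot_rel r) (mem pi)].

(* Main.v *)
Require Import Defs.
From mathcomp Require Import all_boot.
Set Implicit Arguments. Unset Strict Implicit. Unset Printing Implicit Defensive.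
Section Walk.
Variables (T : Type) (V : eqType) (f : T -> V) (g : T -> nat) (r : rel V).
Definition er x y := ((f x == f y) && (g y == (g x).+1)) || r (f x) (f y).

Lemma walk_lem x p : path er x p ->
  (exists z q, [/\ r (f x) z, path r z q & last z q = f (last x p)]) \/
  (f (last x p) = f x /\ g (last x p) = g x + size p).
Proof.
elim: p x => [|y p IH] x /=; first by right; rewrite addn0.
case/andP=> exy /IH [[z [q [ryz pq lq]]]|[lf lg]].
  case/orP: exy => [/andP[/eqP fxy _]|rxy].
    by left; exists z, q; rewrite fxy.
  left; exists (f y), (z :: q); split => //=; by rewrite ryz.
case/orP: exy => [/andP[/eqP fxy /eqP gxy]|rxy].
  by right; rewrite lf lg gxy fxy addSnnS.
by left; exists (f y), [::]; split => //=; rewrite lf.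
Qed.

Lemma cycle_lem (s : seq T) : 0 < size s -> cycle er s ->
  exists c : seq V, [/\ c != [::], uniq c & cycle r c].
Proof.
case: s => [//|x p] _ /=; move/walk_lem; rewrite last_rcons size_rcons.
case=> [[z [q [rxz pq lq]]]|[_ lg]]; last first.
  by move: lg => /eqP; rewrite -{1}[g x]addn0 eqn_add2l.

case: (shortenP pq) lq => p' pp' up' _ lq.
exists (z :: p'); split => //=.
by rewrite rcons_path pp' lq.
Qed.
End Walk.

Section Main.
Variables (V : finType) (E : {set V * V}) (e : V * V -> nat) (F : {set V * V}).
Hypothesis lab : arc_labelling E e.
Hypothesis FE : F \subset E.

Local Notation m := #|E|.
Local Notation PW := (PV E).
Definition Idx := ((V * 'I_m.+1) + {a : V * V | a \in F})%type.

Definition blk (x : PW) : Idx :=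
  match x with
  | inl (v, i, j) => inl (v, i)
  | inr a => match insub (val a) with
             | Some b => inr b
             | None => inl ((val a).1, inord (e (val a)))
             end
  end.

Definition wit (k : Idx) : PW :=
  match k with
  | inl (v, i) => inl (v, i, ord0)
  | inr b => inr (exist _ (val b) (subsetP FE _ (valP b)))
  end.

Lemma blk_wit k : blk (wit k) = k.
Proof.
case: k => [[v i]|b] //=.
case: insubP => [b' _ Eb|]; last by rewrite (valP b).
by congr inr; apply: val_inj.
Qed.

Definition Pk (k : Idx) : {set PW} := [set x | blk x == k].
Definition pi : {set {set PW}} := [set Pk k | k in [set: Idx]].

Lemma Pk_inj : injective Pk.
Proof.
move=> k1 k2 H; have : wit k1 \in Pk k1 by rewrite inE blk_wit.
by rewrite H inE blk_wit => /eqP.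
Qed.

Lemma card_pi : #|pi| = #|V| * (m + 1) + #|F|.
Proof.
rewrite card_imset; last exact: Pk_inj.
rewrite cardsT card_sum card_prod card_ord addn1 card_sig.
by [].
Qed.

Lemma partition_pi : partition pi [set: PW].
Proof.
apply/and3P; split.
- apply/eqP/setP => x; rewrite inE; apply/bigcupP; exists (Pk (blk x)).
    by apply: imset_f; rewrite inE.
  by rewrite inE.
- apply/trivIsetP => A B /imsetP[k1 _ ->] /imsetP[k2 _ ->] neq.
  rewrite -setI_eq0; apply/eqP/setP => x; rewrite !inE.
  apply/andP => -[/eqP h1 /eqP h2]; move: neq; by rewrite -h1 -h2 eqxx.
- apply/imsetP => -[k _ Hk].
  have : wit k \in Pk k by rewrite inE blk_wit.
  by rewrite -Hk inE.
Qed.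


Lemma e_lt a : a \in E -> e a < m.+1.
Proof. by case: lab => _ /(_ a) H /H /andP[_]; rewrite ltnS. Qed.

Lemma e_inj a b : a \in E -> b \in E -> e a = e b -> a = b.
Proof. by case: lab => H _; apply: H. Qed.

Definition rowseq (v : V) (i : 'I_m.+1) : seq PW :=
  [seq inl (v, i, inord j) | j <- iota 0 m.+1].

Definition arcpred (v : V) (i : 'I_m.+1) (a : {a : V * V | a \in E}) :=
  [&& (val a).1 == v, e (val a) == val i & val a \notin F].

Lemma blk_inr_inl a v i :
  (blk (inr a) == inl (v, i)) = arcpred v i a.
Proof.
rewrite /blk /arcpred; case: insubP => [b -> _|/negPf ->] //=.
  by rewrite !andbF.
rewrite !andbT; apply/eqP/andP => [[<- <-]|[/eqP <- /eqP ei]].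
  by rewrite inordK ?eqxx //; apply: e_lt (valP a).
by congr (inl (_, _)); apply: val_inj; rewrite /= inordK // ; apply: e_lt (valP a).
Qed.

Lemma path_iota (P : rel nat) n k :
  (forall j, j < k + n -> P j j.+1) -> path P k (iota k.+1 n).
Proof.
elim: n k => [|n IH] k H //=.
rewrite H ?addnS ?ltnS ?leq_addr //; apply: IH => j; rewrite addSnnS; exact: H.
Qed.

Lemma ham (k : Idx) : has_ham_path (Prel e) (Pk k).
Proof.
case: k => [[v i]|b].
- pose pre := if [pick a | arcpred v i a] is Some a then [:: (inr a : PW)] else [::].
  exists (pre ++ rowseq v i); split.
  + apply: uniq_perm; last 2 first.
    * exact: enum_uniq.
    * move=> x; rewrite mem_enum inE mem_cat /rowseq.
      case: x => [[[v' i'] j]|a].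
      - have -> : (inl (v', i', j) : PW) \in pre = false.
          by rewrite /pre; case: pickP.
        rewrite [blk _]/=; apply/mapP/eqP => [[j' _ [-> -> _]] //|[-> ->]].
        exists (val j); first by rewrite mem_iota /= add0n ltn_ord.
        by rewrite inord_val.
      - have -> : (inr a : PW) \in [seq (inl (v, i, inord j) : PW) | j <- iota 0 m.+1] = false.
          by apply/mapP => -[].
        rewrite orbF blk_inr_inl /pre; case: pickP => [a0 Ha0|H]; last by rewrite H.
        rewrite inE; apply/eqP/idP => [[->]//|Ha]; congr inr; apply: val_inj.
        case/and3P: Ha => _ /eqP Ha _; case/and3P: Ha0 => _ /eqP Ha0 _.
        by apply: e_inj; rewrite ?(valP a) ?(valP a0) ?Ha ?Ha0.
    * rewrite cat_uniq; apply/and3P; split.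
      - by rewrite /pre; case: pickP.
      - rewrite /pre; case: pickP => [a0 _|_]; apply/hasPn => x /mapP[j _ ->] //; by rewrite inE.
      - rewrite /rowseq map_inj_in_uniq ?iota_uniq // => j1 j2.
        rewrite !mem_iota !add0n => /andP[_ h1] /andP[_ h2] [] /(congr1 val).
        by rewrite /= !inordK.
  + have Hrow : path (Prel e) (inl (v, i, inord 0)) (behead (rowseq v i)).
      rewrite /rowseq /= path_map; apply: path_iota => j hj /=.
      by rewrite eqxx /= eqxx /= !inordK ?eqxx // ltnS // ltnW.
    rewrite /pre; case: pickP => [a0 Ha0|_] /=; last exact: Hrow.
    rewrite Hrow andbT; case/and3P: Ha0 => /eqP -> /eqP -> _.
    by rewrite !eqxx inordK.
- exists [:: wit (inr b)]; split => //.
  apply: uniq_perm; rewrite ?enum_uniq // => x.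
  rewrite mem_enum !inE; apply/eqP/eqP => [->|]; first exact: blk_wit.
  case: x => [[[v i] j]|a] //=.
  case: insubP => [b' _ Eb [<-]|//]; congr inr; exact: val_inj.
Qed.


Definition vx (x : PW) : V := match x with inl (v, i, j) => v | inr a => (val a).1 end.
Definition rk (x : PW) : nat := match x with inl (v, i, j) => val i | inr a => e (val a) end.
Definition vk (k : Idx) : V := match k with inl (v, i) => v | inr b => (val b).1 end.
Definition rkk (k : Idx) : nat := match k with inl (v, i) => val i | inr b => e (val b) end.
Definition isF (x : PW) : bool := if blk x is inr _ then true else false.
Definition r' (v u : V) := ((v, u) \in E) && ((v, u) \notin F).

Lemma vx_rk x : vx x = vk (blk x) /\ rk x = rkk (blk x).
Proof.
case: x => [[[v i] j]|a] //=.
case: insubP => [b _ Eb|_] /=; first by rewrite Eb.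
by rewrite inordK //; apply: e_lt (valP a).
Qed.

Lemma pi_blk P x : P \in pi -> x \in P -> P = Pk (blk x).
Proof. by case/imsetP => k _ -> ; rewrite inE => /eqP ->. Qed.

Lemma notF_target P x y z : P \in pi -> y \in P -> z \in P -> Prel e x y -> ~~ isF z.
Proof.
move=> HP Hy Hz.
have : blk z = blk y by move: Hz; rewrite (pi_blk HP Hy) inE => /eqP.
rewrite /isF => ->; case: x => [[[? ?] ?]|?]; case: y {Hy} => [[[? ?] ?]|?] //.
Qed.

Lemma edge P Q x y : P \in pi -> Q \in pi -> P != Q -> x \in P -> y \in Q ->
  Prel e x y -> ~~ isF x -> er vx rk r' x y.
Proof.
move=> HP HQ neq Hx Hy.
rewrite (pi_blk HP Hx) (pi_blk HQ Hy) in neq.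
rewrite /er; case: x {Hx} neq => [[[v i] j]|a]; case: y {Hy} => [[[w i'] j']|b] //=.
- move=> neq /andP[/eqP vw /orP[/andP[/eqP ii _]|/andP[-> _]]] _; subst w.
    by case/eqP: neq; congr (Pk (inl (_, _))); exact: val_inj ii.
  by rewrite eqxx.
- rewrite /isF /=; case: insubP => [//|aF] /= neq /orP[/andP[/andP[/eqP wa /eqP ia] _]|].
    move: neq; rewrite wa; have -> : i' = inord (e (val a)).
      by apply: val_inj; rewrite /= -ia inordK // ia.
    by move=> /eqP [].
  move=> /andP[/andP[/eqP wa _] _] _; apply/orP; right.
  by rewrite /r' wa -surjective_pairing (valP a).
Qed.

Lemma acyc : feedback_arc_set E F -> acyclic_on (quot_rel (Prel e)) (mem pi).
Proof.
move=> [_ fas] c nc /allP cpi; apply/negP => cyc.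
case: c nc cpi cyc => [//|P0 c'] _ cpi cyc.
set c := P0 :: c' in cpi cyc.
have : P0 \in pi by apply: cpi; rewrite inE eqxx.
case/imsetP => k0 _ _; pose x0 := wit k0.
pose rp (P : {set PW}) : PW := odflt x0 [pick x in P].
have rpP P : P \in pi -> rp P \in P.
  move=> HP; rewrite /rp; case: pickP => [//|H].
  by case/imsetP: HP => k _ Pe; move: (H (wit k)); rewrite Pe inE blk_wit eqxx.
have nF P : P \in c -> ~~ isF (rp P).
  move=> Pc; move: (prev_cycle cyc Pc) => /andP[_ /existsP[x /andP[Hx /existsP[y /andP[Hy Hxy]]]]].
  exact: notF_target (cpi _ Pc) Hy (rpP _ (cpi _ Pc)) Hxy.
have cyc2 : cycle (er vx rk r') (map rp c).
  rewrite cycle_map; apply: (sub_in_cycle (P := mem c)); last 2 first.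
  - by apply/allP.
  - exact: cyc.
  move=> P Q Pc Qc /andP[neq /existsP[x /andP[Hx /existsP[y /andP[Hy Hxy]]]]].
  have HP := cpi _ Pc; have HQ := cpi _ Qc.
  have bx : blk (rp P) = blk x.
    by move: (rpP _ HP); rewrite (pi_blk HP Hx) inE => /eqP.
  have bxF : isF x = isF (rp P) by rewrite /isF bx.
  have := edge HP HQ neq Hx Hy Hxy; rewrite bxF nF // => /(_ isT).
  have by' : blk (rp Q) = blk y.
    by move: (rpP _ HQ); rewrite (pi_blk HQ Hy) inE => /eqP.
  rewrite /er /=.
  case: (vx_rk x) (vx_rk y) (vx_rk (rp P)) (vx_rk (rp Q)) => [-> ->] [-> ->] [-> ->] [-> ->].
  by rewrite bx by'.
have [|d [nd ud cd]] := cycle_lem (s := map rp c) _ cyc2; first by rewrite size_map.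
have sub : subrel r' (arc_rel E) by move=> a b /andP[].
have [x xd xF] := fas d nd ud (sub_cycle sub cd).
by case/andP: (next_cycle cd xd) => _; rewrite xF.
Qed.

End Main.

Theorem lemma5p6 (V : finType) (E : {set V * V}) (e : V * V -> nat)
    (F : {set V * V}) :
  0 < #|V| -> no_self_loops E -> deg_cond E -> arc_labelling E e ->
  feedback_arc_set E F ->
  exists pi : {set {set PV E}},
    H_partition (Prel e) (#|V| * (#|E| + 1) + #|F|) pi.
Proof.
move=> _ _ _ lab fas; have FE := fas.1.
exists (@pi V E e F); split.
- exact: (partition_pi e FE).
- exact: (card_pi e FE).
- by move=> P /imsetP[k _ ->]; exact: (ham lab FE).
- exact: (acyc lab FE).
Qed.
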